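(* Let $p$ be a prime with $p\notin\{2,3,7,43\}$. Then $\mathcal{M}_p^{(2)}=\emptyset$.
   Context: For positive integers $k,n$ let $S_k(n)=\sum_{i=1}^{n} i^k$. For an integer $a$, $\mathcal{M}_a$ denotes the set of positive integers $n$ such that $S_n(n)\equiv a\pmod{n}$. For a prime $p$, $\mathcal{M}_p^{(2)}=\{n\in\mathcal{M}_p : p^2\mid n,\ p^3\nmid n\}$. *)

(* Defs.v *)
From mathcomp Require Import all_boot.
Set Implicit Arguments. Unset Strict Implicit. Unset Printing Implicit Defensive.

Definition S (k n : nat) : nat := \sum_(1 <= i < n.+1) i ^ k.

Definition inM (a n : nat) : Prop := 0 < n /\ S n n = a %[mod n].

Definition inM2 (p n : nat) : Prop := inM p n /\ p ^ 2 %| n /\ ~~ (p ^ 3 %| n).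

(* Main.v *)
Require Import Defs.
From mathcomp Require Import all_boot all_order all_algebra all_field.
Import GRing.Theory.
Set Implicit Arguments. Unset Strict Implicit. Unset Printing Implicit Defensive.

Section FF.
Local Open Scope ring_scope.
Lemma ff_card_pos (F : finFieldType) : (0 < #|F|.-1)%N.
Proof.
rewrite -(cardC1 (0:F)); apply/card_gt0P; exists 1; by rewrite !inE oner_neq0.
Qed.

Lemma ff_unit_exp (F : finFieldType) (x : F) : x != 0 -> x ^+ (#|F|.-1) = 1.
Proof.
move=> nz; have := expf_card x.
have h : #|F| = (#|F|.-1).+1.
  by rewrite prednK //; apply/card_gt0P; exists 0.
rewrite {1}h exprS => e.
by apply: (mulfI nz); rewrite e mulr1.
Qed.

Lemma ff_exists_nonroot (F : finFieldType) (k : nat) :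
  ~~ (#|F|.-1 %| k)%N -> exists2 a : F, a != 0 & a ^+ k != 1.
Proof.
move=> ndk.
case: (boolP [exists a : F, (a != 0) && (a ^+ k != 1)]).
  by case/existsP=> a /andP[]; exists a.
rewrite negb_exists => /forallP H; exfalso.
set d := #|F|.-1.
have dpos : (0 < d)%N := ff_card_pos F.
have kpos : (0 < k %% d)%N by rewrite lt0n -/(dvdn d k).
have Hx : forall x : F, x != 0 -> x ^+ (k %% d) = 1.
  move=> x nz; have := H x; rewrite nz /= negbK => /eqP e.
  move: e; rewrite {1}(divn_eq k d) exprD (mulnC (k %/ d)%N) exprM ff_unit_exp // expr1n mul1r.
  done.
have := @max_unity_roots F (k %% d) (enum (predC1 (0:F))) kpos.
rewrite enum_uniq -cardE cardC1 -/d.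
have -> : all (k %% d).-unity_root (enum (predC1 (0:F))).
  apply/allP=> x; rewrite mem_enum inE => nz; apply/unity_rootP; exact: Hx.
move=> /(_ isT isT); rewrite leqNgt ltn_pmod //.
Qed.
End FF.

Section FF2.
Local Open Scope ring_scope.
Lemma ff_powsum0 (F : finFieldType) (k : nat) :
  ~~ (#|F|.-1 %| k)%N -> \sum_(x : F) x ^+ k = 0.
Proof.
move=> ndk; have [a anz ak] := ff_exists_nonroot ndk.
have e : \sum_(x : F) x ^+ k = a ^+ k * \sum_(x : F) x ^+ k.
  rewrite [LHS](reindex_inj (mulfI anz)) /= mulr_sumr.
  by apply: eq_bigr => x _; rewrite exprMn.
have : (a ^+ k - 1) * \sum_(x : F) x ^+ k = 0 by rewrite mulrBl -e mul1r subrr.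
by move/eqP; rewrite mulf_eq0 subr_eq0 (negbTE ak) => /eqP.
Qed.

Lemma Fp_sum (q : nat) (f : 'F_q -> 'F_q) : prime q ->
  \sum_(x : 'F_q) f x = \sum_(0 <= i < q) f i%:R.
Proof.
move=> pq.
transitivity (\sum_(0 <= i < (Zp_trunc (pdiv q)).+2) f i%:R).
  by rewrite big_mkord; apply: eq_bigr => x _; rewrite natr_Zp.
by rewrite Fp_cast.
Qed.
End FF2.

Lemma powsum_dvd (q k : nat) : prime q -> ~~ (q.-1 %| k) ->
  q %| \sum_(0 <= i < q) i ^ k.
Proof.
move=> pq nd.
rewrite (dvdn_pcharf (pchar_Fp pq)) natr_sum.
under eq_bigr do rewrite natrX.
rewrite -(@Fp_sum q (fun x => (x ^+ k)%R)) //.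
by rewrite ff_powsum0 // card_Fp.
Qed.

Lemma S_shift n : 0 < n -> S n n = \sum_(0 <= i < n) i ^ n + n ^ n.
Proof.
move=> n0; rewrite /S big_nat_recr //= (big_ltn n0) exp0n // add0n.
Qed.

Lemma sum_congr M (r : seq nat) (f g : nat -> nat) :
  (forall i, f i = g i %[mod M]) -> \sum_(i <- r) f i = \sum_(i <- r) g i %[mod M].
Proof.
move=> H; elim: r => [|a r IH]; first by rewrite !big_nil.
by rewrite !big_cons -modnDm IH H modnDm.
Qed.

Lemma block M d c (f : nat -> nat) :
  (forall i j, f (i + j * d) = f i %[mod M]) ->
  \sum_(0 <= i < c * d) f i = c * \sum_(0 <= i < d) f i %[mod M].
Proof.
move=> H; elim: c => [|c IH]; first by rewrite !mul0n big_geq.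
rewrite mulSnr (@big_cat_nat _ _ _ (c * d)) ?leq_addr //=.
have -> : \sum_(c * d <= i < c * d + d) f i = \sum_(0 <= i < d) f (i + c * d).
  by rewrite -{1}(add0n (c * d)) big_addn addKn.
rewrite -modnDm IH (@sum_congr M _ _ f); last by move=> i; rewrite H.
by rewrite modnDm mulSnr.
Qed.

Lemma binom_p2 p n i j : p %| n -> (i + j * p) ^ n = i ^ n %[mod p ^ 2].
Proof.
move=> pn; rewrite expnDn big_ord_recl /= bin0 subn0 expn0 !mul1n muln1.
have : p ^ 2 %| \sum_(k < n) 'C(n, bump 0 k) * (i ^ (n - bump 0 k) * (j * p) ^ bump 0 k).
  apply: dvdn_sum => k _; rewrite /bump /= add1n.
  case: k => [[|k] Hk] /=.
    rewrite bin1 expn1 mulnA mulnC !mulnA expnS expn1.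
    by apply: dvdn_mulr; rewrite -mulnA; apply: dvdn_mull; apply: dvdn_mul.
  apply: dvdn_mull; apply: dvdn_mull; rewrite expnMn; apply: dvdn_mull.
  by apply: dvdn_exp2l.
by move/divnK <-; rewrite addnC modnMDl.
Qed.

Lemma shift_mod d n : 0 < n -> d %| n ->
  \sum_(0 <= i < n) i ^ n = (n %/ d) * \sum_(0 <= i < d) i ^ n %[mod d].
Proof.
move=> n0 dn.
have hn : n = n %/ d * d by rewrite divnK.
have -> : \sum_(0 <= i < n) i ^ n = \sum_(0 <= i < n %/ d * d) i ^ n by rewrite -hn.
apply: block => i j.
by rewrite -modnXm addnC modnMDl modnXm.
Qed.

Lemma S_mod d n : 0 < n -> d %| n ->
  S n n = (n %/ d) * \sum_(0 <= i < d) i ^ n %[mod d].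
Proof.
move=> n0 dn; rewrite S_shift // -modnDm.
have -> : n ^ n %% d = 0 by apply/eqP; apply: dvdn_exp.
by rewrite addn0 modn_mod shift_mod.
Qed.

Lemma q_lemma p n q : prime p -> prime q -> q != p -> 0 < n -> q %| n ->
  S n n = p %[mod n] -> ~~ (q * q %| n) /\ q.-1 %| n.
Proof.
move=> pp pq qp n0 qn H.
have Sq : S n n = p %[mod q] by rewrite -(modn_dvdm _ qn) H modn_dvdm.
have E := S_mod n0 qn.
have npq : ~~ (q %| p) by rewrite dvdn_prime2 // qp.
split.
  apply/negP => qqn; apply: (negP npq).
  have qc : q %| n %/ q.
    by rewrite -(@dvdn_pmul2r q) ?prime_gt0 // divnK.
  by rewrite /dvdn -Sq E; apply: dvdn_mulr.
apply/negPn/negP => nd; apply: (negP npq).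
by rewrite /dvdn -Sq E; apply: dvdn_mull; apply: powsum_dvd.
Qed.

Lemma p_lemma p n : prime p -> 0 < n -> p ^ 2 %| n ->
  S n n = p %[mod n] -> p.-1 %| n.
Proof.
move=> pp n0 p2n H.
have Sp : S n n = p %[mod p ^ 2] by rewrite -(modn_dvdm _ p2n) H modn_dvdm.
have E := S_mod n0 p2n.
have E2 : \sum_(0 <= i < p ^ 2) i ^ n = p * \sum_(0 <= i < p) i ^ n %[mod p ^ 2].
  have -> : p ^ 2 = p * p by [].
  apply: block => i j; apply: binom_p2.
  by apply: dvdn_trans p2n; rewrite (dvdn_exp2l p (isT : 1 <= 2)).
apply/negPn/negP => nd.
have T0 := powsum_dvd pp nd.
have : p ^ 2 %| p.
  rewrite /dvdn -Sp E -modnMmr E2 modnMmr; apply: dvdn_mull.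
  by rewrite (_ : p ^ 2 = p * p) //; apply: dvdn_mul.
have p1 := prime_gt1 pp.
rewrite /dvdn modn_small.
  by move/eqP=> p0; move: p1; rewrite p0.
by rewrite -{1}(muln1 p) (_ : p ^ 2 = p * p) // ltn_pmul2l // prime_gt0.
Qed.

Lemma sqfree_dvd (d N : nat) : 0 < d ->
  (forall q, prime q -> q %| d -> q %| N /\ ~~ (q * q %| d)) -> d %| N.
Proof.
move=> d0 H.
set g := gcdn d N.
have gd : g %| d := dvdn_gcdl d N.
have hd : d = d %/ g * g by rewrite divnK.
case: (ltnP 1 (d %/ g)) => [lt1|].
  have pq := pdiv_prime lt1.
  have qdg := pdiv_dvd (d %/ g).
  set q := pdiv (d %/ g) in pq qdg.
  have qd : q %| d by rewrite hd; apply: dvdn_mulr.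
  have [qN nqq] := H q pq qd.
  have qg : q %| g by rewrite dvdn_gcd qd.
  by case/negP: nqq; rewrite [X in _ %| X]hd; apply: dvdn_mul.
rewrite leq_eqVlt ltnS leqn0 => /orP[/eqP e1|/eqP e0].
  by rewrite hd e1 mul1n dvdn_gcdr.
by move: d0; rewrite hd e0.
Qed.

Lemma fin_check r : prime r -> r.-1 %| 1806 -> r \in [:: 2; 3; 7; 43].
Proof.
move=> pr hd.
have hr : r < 1808.
  have := dvdn_leq (isT : 0 < 1806) hd.
  by case: r {pr hd} => // r; rewrite ltnS.
have C : all (fun r => (r.-1 %| 1806) ==> prime r ==> (r \in [:: 2; 3; 7; 43])) (iota 0 1808).
  by vm_compute.
by move/allP: C => /(_ r); rewrite mem_iota add0n hr /= hd pr => /(_ isT).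
Qed.

Theorem mainTheorem6 (p : nat) :
  prime p -> p \notin [:: 2; 3; 7; 43] -> forall n : nat, ~ inM2 p n.
Proof.
move=> pp pnl n [[n0 Hs] [p2n _]].
have key : forall r, prime r -> r %| n -> r \in [:: 2; 3; 7; 43].
  elim/ltn_ind => r IH pr rn.
  have hd : r.-1 %| n.
    case: (eqVneq r p) => [->|rp]; first exact: p_lemma.
    exact: (q_lemma pp pr rp n0 rn Hs).2.
  have d0 : 0 < r.-1 by rewrite -ltnS prednK ?prime_gt0 // prime_gt1.
  apply: (fin_check pr); apply: (sqfree_dvd d0) => q pq qd.
  have qr : q < r.
    by apply: leq_ltn_trans (dvdn_leq d0 qd) _; rewrite prednK ?prime_gt0.
  have qn : q %| n := dvdn_trans qd hd.
  have ql := IH q qr pq qn.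
  split; first by move: ql; rewrite !inE => /or4P[] /eqP->.
  have qp : q != p by apply: contraNneq pnl => <-.
  have := (q_lemma pp pq qp n0 qn Hs).1; apply: contra => h.
  exact: dvdn_trans h hd.
apply: (negP pnl); apply: key pp _.
by apply: dvdn_trans p2n; rewrite (dvdn_exp2l p (isT : 1 <= 2)).
Qed.
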